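(* Let $Z$ be a nonempty compact metric space. Then there exists a topologically mixing dynamical system $(X,T)$ whose set of minimal points is homeomorphic to $Z$ and such that every minimal point of $(X,T)$ is a fixed point.
   Context: A dynamical system $(X,T)$: $X$ is a compact metric space with more than one point and without isolated points, $T:X\to X$ a continuous surjection. $(X,T)$ is topologically mixing if for all nonempty open $U,V\subset X$ the set $\{n\in\mathbb{Z}_+:U\cap T^{-n}V\neq\varnothing\}$ is cofinite. A point is minimal if it lies in a minimal subset, i.e. a nonempty closed $T$-invariant set containing no nonempty closed proper subset $K'$ with $TK'\subset K'$. *)

(* Defs.v *)
From HB Require Import structures.
From mathcomp Require Import all_boot all_order all_algebra.
From mathcomp Require Import all_classical all_reals all_analysis.
Set Implicit Arguments. Unset Strict Implicit. Unset Printing Implicit Defensive.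
Import Order.TTheory GRing.Theory Num.Theory.
Local Open Scope classical_set_scope.

Definition dynamical_system {R : realType} (X : metricType R) (T : X -> X) : Prop :=
  [/\ compact [set: X],
      (exists x y : X, x <> y),
      (forall x : X, ~ open [set x]),
      continuous T &
      (forall y : X, exists x : X, T x = y)].

Definition topologically_mixing {X : topologicalType} (T : X -> X) : Prop :=
  forall U V : set X, open U -> open V -> U !=set0 -> V !=set0 ->
    finite_set (~` [set n : nat | U `&` ((iter n T) @^-1` V) !=set0]).

Definition minimal_set {X : topologicalType} (T : X -> X) (K : set X) : Prop :=
  [/\ K !=set0, closed K, T @` K `<=` K &
      forall K' : set X, K' `<=` K -> K' !=set0 -> closed K' ->
        T @` K' `<=` K' -> K' = K].

Definition minimal_point {X : topologicalType} (T : X -> X) (x : X) : Prop :=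
  exists K, minimal_set T K /\ K x.

Definition minimal_points {X : topologicalType} (T : X -> X) : set X :=
  [set x | minimal_point T x].

Definition homeomorphic_to {X Z : topologicalType} (A : set X) : Prop :=
  exists (f : X -> Z) (g : Z -> X),
    [/\ {within A, continuous f}, continuous g,
        (forall z, A (g z)),
        (forall x, A x -> g (f x) = x) &
        (forall z, f (g z) = z)].

(* Main.v *)
Require Import Defs.
From HB Require Import structures.
From mathcomp Require Import all_boot all_order all_algebra.
From mathcomp Require Import all_classical all_reals all_analysis.
From mathcomp Require Import ring lra zify.
Set Implicit Arguments. Unset Strict Implicit. Unset Printing Implicit Defensive.
Import Order.TTheory GRing.Theory Num.Theory.
Local Open Scope classical_set_scope.

Definition cnt (g : nat -> nat) (a n : nat) : nat := \sum_(i < n) g (a + i).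

Lemma cnt_split g a n k : cnt g a (n + k) = cnt g a n + cnt g (a + n) k.
Proof.
rewrite /cnt big_split_ord /=; congr (_ + _); apply: eq_bigr => i _.
by rewrite addnA.
Qed.

Lemma cnt_mono_len g a n k : n <= k -> cnt g a n <= cnt g a k.
Proof. by move=> /subnKC <-; rewrite cnt_split leq_addr. Qed.

Lemma cnt_le g h a n : (forall i, g i <= h i) -> cnt g a n <= cnt h a n.
Proof. by move=> gh; apply: leq_sum => i _. Qed.

Lemma cnt0 g a n : (forall i, i < n -> g (a + i) = 0) -> cnt g a n = 0.
Proof. by move=> H; apply: big1 => i _; apply: H. Qed.

Lemma cntS g a n : cnt g a n.+1 = cnt g a n + g (a + n).
Proof. by rewrite -addn1 cnt_split /cnt big_ord1 addn0. Qed.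

Lemma cnt_pt q a n : cnt (fun j => nat_of_bool (j == q)) a n <= 1.
Proof.
elim: n => [|n IH]; first by rewrite /cnt big_ord0.
rewrite cntS; case: eqP => [E|_]; last by rewrite addn0.
rewrite cnt0 // => i ilt; apply/eqP; rewrite eqb0; apply/eqP; lia.
Qed.

Lemma cnt_pt0 q a n : (q < a) || (a + n <= q) ->
  cnt (fun j => nat_of_bool (j == q)) a n = 0.
Proof. move=> H; apply: cnt0 => i ilt; apply/eqP; rewrite eqb0; apply/eqP; lia. Qed.

Lemma cnt_cut0 h m a n : m <= a -> cnt (fun j => (j < m) * h j) a n = 0.
Proof. by move=> ma; apply: cnt0 => i _; rewrite ltnNge (leq_trans ma (leq_addr _ _)). Qed.

Lemma cnt_cut h m a n : cnt (fun j => (j < m) * h j) a n <= cnt h 0 m.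
Proof.
case: (leqP m a) => am; first by rewrite cnt_cut0.
have [d ->] : exists d, m = a + d by exists (m - a); lia.
rewrite cnt_split /= add0n.
case: (leqP n d) => nm.
  apply: leq_trans (leq_addl _ _).
  apply: leq_trans (cnt_mono_len _ _ nm).
  apply: cnt_le => i; by case: (_ < _); rewrite ?mul1n ?mul0n.
have [k ->] : exists k, n = d + k by exists (n - d); lia.
rewrite cnt_split (@cnt_cut0 h (a+d) (a+d)) // addn0.
idtac.
apply: leq_trans (leq_addl _ _).
rewrite /cnt; apply: leq_sum => i _.
by case: (_ < _); rewrite ?mul1n ?mul0n.
Qed.

Lemma cnt_shift h N s n :
  cnt (fun j => (N <= j) * h (j - N)) s n <= cnt h (s - N) n.
Proof.
case: (leqP N s) => Ns.
  apply: leq_sum => i _; rewrite (leq_trans Ns (leq_addr _ _)) mul1n.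
  by have -> : s + i - N = s - N + i by lia.
have -> : s - N = 0 by lia.
case: (leqP n (N - s)) => nN.
  rewrite cnt0 // => i ilt; have -> : (N <= s + i) = false by lia.
  by rewrite mul0n.
have -> : n = (N - s) + (n - (N - s)) by lia.
rewrite cnt_split cnt0; last first.
  by move=> i ilt; have -> : (N <= s + i) = false by lia.
rewrite add0n; apply: leq_trans (cnt_mono_len _ _ (leq_addl _ _)).
apply: leq_sum => i _; have -> : N <= s + (N - s) + i by lia.
by rewrite mul1n; have -> : s + (N - s) + i - N = 0 + i by lia.
Qed.

Lemma cnt_shift0 h N s n : s + n <= N ->
  cnt (fun j => (N <= j) * h (j - N)) s n = 0.
Proof. by move=> H; apply: cnt0 => i ilt; have -> : (N <= s + i) = false by lia. Qed.

Lemma cnt_blocks g L : (forall s, 1 <= cnt g s L) ->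
  forall M s, M <= cnt g s (L * M).
Proof.
move=> H; elim=> [|M IH] s //.
rewrite mulnS cnt_split.
by have := H s; have := IH (s + L); lia.
Qed.

Lemma cnt_ge_term g a n i : i < n -> g (a + i) <= cnt g a n.
Proof.
move=> lt; have [k ->] : exists k, n = i.+1 + k by exists (n - i.+1); lia.
rewrite cnt_split cntS; lia.
Qed.



Section Construction.
Variables (R : realType) (Z : metricType R).

Definition A := (Z * bool)%type.
Definition bsq (x : nat -> A) (i : nat) : nat := (x i).2.
Definition good (x : nat -> A) : Prop :=
  (forall n, ~~ (x n).2 -> (x n).1 = (x n.+1).1) /\
  (forall s e, (cnt (bsq x) s (2 ^ e) <= e.+1)%N).
Definition X := {x : nat -> A | good x}.
HB.instance Definition _ := gen_eqMixin X.
HB.instance Definition _ := gen_choiceMixin X.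

Local Open Scope ring_scope.
Definition dA (a b : A) : R := Num.min 1 (mdist a.1 b.1) + (a.2 != b.2)%:R.
Definition wt (n : nat) : R := n.+1%:R^-1.
Definition term (x y : nat -> A) n := wt n * dA (x n) (y n).
Definition dd (x y : nat -> A) : R := sup (range (term x y)).

Lemma min1_tri (p q r : R) : 0 <= p -> 0 <= q -> r <= p + q ->
  Num.min 1 r <= Num.min 1 p + Num.min 1 q.
Proof.
move=> p0 q0 rpq; rewrite /Num.min.
case: ifP => [/ltW|]; case: ifP => [/ltW|]; case: ifP => [/ltW|] /=; 
  rewrite ?ltNge => ?; try move/negbFE; try move=> ?; try lra.
Qed.

Lemma bool_tri (a b c : bool) : (a != c)%:R <= (a != b)%:R + (b != c)%:R :> R.
Proof. case: a; case: b; case: c => /=. all: rewrite ?addr0 ?add0r; lra. Qed.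

Lemma min1_ge0 (r : R) : 0 <= r -> 0 <= Num.min 1 r.
Proof. by move=> r0; rewrite /Num.min; case: ifP. Qed.

Lemma min1_le1 (r : R) : Num.min 1 r <= 1.
Proof. by rewrite /Num.min; case: ifP => // /negbT; rewrite -leNgt. Qed.

Lemma min1_le (r : R) : Num.min 1 r <= r.
Proof. by rewrite /Num.min; case: ifP => // /ltW. Qed.

Lemma min1_eq0 (r : R) : Num.min 1 r = 0 -> r = 0.
Proof. by rewrite /Num.min; case: ifP => // _ /eqP; rewrite oner_eq0. Qed.

Lemma dA_ge0 a b : 0 <= dA a b.
Proof. by rewrite /dA addr_ge0 ?ler0n ?min1_ge0 ?mdist_ge0. Qed.

Lemma dA_le2 a b : dA a b <= 2.
Proof.
rewrite /dA; have := min1_le1 (mdist a.1 b.1).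
have : (a.2 != b.2)%:R <= 1 :> R by case: (_ != _); rewrite ?ler01.
lra.
Qed.

Lemma dA_sym a b : dA a b = dA b a.
Proof. by rewrite /dA metric_sym eq_sym. Qed.

Lemma dA_xx a : dA a a = 0.
Proof. by rewrite /dA mdistxx eqxx addr0 /Num.min ltr10. Qed.

Lemma dA_eq0 a b : dA a b = 0 -> a = b.
Proof.
move=> /eqP; rewrite /dA paddr_eq0 ?ler0n ?min1_ge0 ?mdist_ge0 //.
move=> /andP[/eqP/min1_eq0/mdist_positivity h1]; rewrite pnatr_eq0 eqb0 negbK.
by case: a b h1 => [a1 a2] [b1 b2] /= -> /eqP ->.
Qed.

Lemma dA_tri a b c : dA a c <= dA a b + dA b c.
Proof.
rewrite /dA.
have := @min1_tri (mdist a.1 b.1) (mdist b.1 c.1) (mdist a.1 c.1)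
  (mdist_ge0 _ _) (mdist_ge0 _ _) (metric_triangle _ _ _).
have := bool_tri a.2 b.2 c.2; lra.
Qed.

Lemma wt_gt0 n : 0 < wt n.
Proof. by rewrite /wt invr_gt0 ltr0n. Qed.

Lemma wt_le1 n : wt n <= 1.
Proof. by rewrite /wt invf_le1 ?ltr0n // ler1n. Qed.

Lemma wt_anti m n : (m <= n)%N -> wt n <= wt m.
Proof. by move=> mn; rewrite /wt lef_pV2 ?posrE ?ltr0n // ler_nat. Qed.

Lemma term_ge0 x y n : 0 <= term x y n.
Proof. by rewrite /term mulr_ge0 ?dA_ge0 // ltW // wt_gt0. Qed.

Lemma term_le x y n : term x y n <= 2 * wt n.
Proof. by rewrite /term mulrC ler_wpM2r ?dA_le2 // ltW // wt_gt0. Qed.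

Lemma term_ub x y : has_ubound (range (term x y)).
Proof.
exists 2 => _ [n _ <-]; apply: le_trans (term_le _ _ _) _.
have := wt_le1 n; lra.
Qed.

Lemma dd_ub x y n : term x y n <= dd x y.
Proof. by apply: ub_le_sup; [exact: term_ub | exists n]. Qed.

Lemma dd_le x y c : (forall n, term x y n <= c) -> dd x y <= c.
Proof. by move=> H; apply: ge_sup; [exists (term x y 0%N), 0%N | move=> _ [n _ <-]]. Qed.

Lemma dd_ge0 x y : 0 <= dd x y.
Proof. exact: le_trans (term_ge0 x y 0) (dd_ub _ _ _). Qed.

Lemma dd_xx x : dd x x = 0.
Proof.
apply/eqP; rewrite eq_le dd_ge0 andbT; apply: dd_le => n.
by rewrite /term dA_xx mulr0.
Qed.

Lemma dd_sym x y : dd x y = dd y x.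
Proof.
rewrite /dd; congr sup; apply/funext => r; rewrite propeqE.
by split => -[n _ <-]; exists n => //; rewrite /term dA_sym.
Qed.

Lemma dd_tri x y z : dd x z <= dd x y + dd y z.
Proof.
apply: dd_le => n; apply: le_trans (lerD (dd_ub x y n) (dd_ub y z n)).
by rewrite /term -mulrDr ler_wpM2l ?dA_tri // ltW // wt_gt0.
Qed.

Lemma dd_eq0 x y : dd x y = 0 -> x = y.
Proof.
move=> d0; apply/funext => n; apply: dA_eq0.
have : term x y n <= 0 by rewrite -d0 dd_ub.
have := term_ge0 x y n; rewrite /term => h1 h2.
have /eqP : wt n * dA (x n) (y n) = 0 by apply/eqP; rewrite eq_le h1 h2.
by rewrite mulf_eq0 gt_eqF ?wt_gt0 //= => /eqP.
Qed.

Definition dX (x y : X) : R := dd (sval x) (sval y).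

Lemma X_eq (x y : X) : sval x = sval y -> x = y.
Proof. by apply: eq_sig_hprop => ? ? ?; exact: Prop_irrelevance. Qed.

Lemma dX_xx x : dX x x = 0. Proof. exact: dd_xx. Qed.
Lemma dX_pos x y : dX x y = 0 -> x = y.
Proof. by move/dd_eq0/X_eq. Qed.
Lemma dX_sym x y : dX x y = dX y x. Proof. exact: dd_sym. Qed.
Lemma dX_tri y x z : dX x z <= dX x y + dX y z. Proof. exact: dd_tri. Qed.

HB.instance Definition _ := @isMetric.Build R X dX dX_xx dX_pos dX_sym dX_tri.

End Construction.



Section Glue.
Variables (R : realType) (Z : metricType R).
Local Notation A := (A Z).

Definition Gm (m : nat) := (2 ^ (2 * m + 2))%N.

Definition zg (x y : nat -> A) m N n : Z :=
  if n < m then (x n).1 else if n <= m + Gm m then (x m.-1).1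
  else if n < N then (y 0).1 else if n < N + m then (y (n - N)).1
  else (y m.-1).1.
Definition bg (x y : nat -> A) m N n : bool :=
  if n < m then (x n).2 else if n == m + Gm m then true
  else if (N <= n) && (n < N + m) then (y (n - N)).2 else false.
Definition glue x y m N n : A := (zg x y m N n, bg x y m N n).

Lemma glue_P1 x y m N : good x -> good y -> (0 < m)%N -> (m + 2 * Gm m <= N)%N ->
  forall n, ~~ (glue x y m N n).2 -> (glue x y m N n).1 = (glue x y m N n.+1).1.
Proof.
move=> [gx _] [gy _] m0 mN n; rewrite /glue /zg /bg /=.
have G0 : (0 < Gm m)%N by rewrite /Gm expn_gt0.
repeat (case: ifP => ?); try lia.
- exact: gx.
- by have -> : m.-1 = n by lia.
- have -> : (n.+1 - N = (n - N).+1)%N by lia.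
  exact: gy.
- by have -> : m.-1 = (n - N)%N by lia.
- by [].
- by [].
- by have -> : (n.+1 - N = 0)%N by lia.
- by [].
Qed.

Lemma glue_P2 x y m N : good x -> good y -> (0 < m)%N -> (m + 2 * Gm m <= N)%N ->
  forall s e, (cnt (bsq (glue x y m N)) s (2 ^ e) <= e.+1)%N.
Proof.
move=> [_ px] [_ py] m0 mN s e.
pose gx := fun j => ((j < m) * bsq x j)%N.
pose gq := fun j => nat_of_bool (j == (m + Gm m)%N).
pose gy := fun j => ((N <= j) * (fun i => (i < m) * bsq y i) (j - N))%N.
have hb : forall j, (bsq (glue x y m N) j <= gx j + gq j + gy j)%N.
  move=> j; rewrite /bsq /glue /bg /= /gx /gq /gy /bsq /=.
  case: (x j).2; case: (y (j - N)).2; repeat (case: ifP => ?); try lia.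
have Hc : (cnt (bsq (glue x y m N)) s (2^e) <=
    cnt gx s (2^e) + cnt gq s (2^e) + cnt gy s (2^e))%N.
  by apply: leq_trans (cnt_le _ _ hb) _; rewrite /cnt !big_split.
have m2m : (m <= 2 ^ m)%N by apply: ltnW; apply: ltn_expl.
have hx1 : (cnt gx s (2^e) <= e.+1)%N.
  apply: leq_trans (px s e); apply: cnt_le => j; rewrite /gx.
  by case: (j < m); rewrite ?mul1n ?mul0n.
have hx2 : (cnt gx s (2^e) <= m.+1)%N.
  apply: leq_trans (cnt_cut _ _ _ _) _.
  exact: leq_trans (cnt_mono_len _ _ m2m) (px 0 m).
have hx3 : (m <= s)%N -> cnt gx s (2^e) = 0%N by move=> ?; exact: cnt_cut0.
have hq1 : (cnt gq s (2^e) <= 1)%N by exact: cnt_pt.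
have hq2 : ((m + Gm m < s) || (s + 2^e <= m + Gm m))%N -> cnt gq s (2^e) = 0%N.
  by move=> ?; exact: cnt_pt0.
have hy0 := cnt_shift (fun i => (i < m) * bsq y i)%N N s (2^e).
have hy1 : (cnt gy s (2^e) <= e.+1)%N.
  apply: leq_trans hy0 _; apply: leq_trans (py (s - N) e).
  by apply: cnt_le => j; case: (j < m); rewrite ?mul1n ?mul0n.
have hy2 : (cnt gy s (2^e) <= m.+1)%N.
  apply: leq_trans hy0 _; apply: leq_trans (cnt_cut _ _ _ _) _.
  exact: leq_trans (cnt_mono_len _ _ m2m) (py 0 m).
have hy3 : (s + 2^e <= N)%N -> cnt gy s (2^e) = 0%N by move=> ?; exact: cnt_shift0.
have hP : (Gm m < 2 ^ e -> 2 * m + 2 < e)%N by rewrite /Gm ltn_exp2l.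
move: Hc hx1 hx2 hx3 hq1 hq2 hy1 hy2 hy3 hP.
set P := (2 ^ e)%N; set G := Gm m.
set Cx := cnt gx s P; set Cq := cnt gq s P; set Cy := cnt gy s P.
lia.
Qed.
End Glue.



Section Topo.
Variables (R : realType) (Z : metricType R).
Local Notation A := (A Z).
Local Notation X := (X Z).
Local Notation wt := (wt R).
Local Open Scope ring_scope.

Lemma ballX (x y : X) e : ball x e y <-> dX x y < e.
Proof. by rewrite ballEmdist. Qed.

Lemma open_ballX (U : set X) x : open U -> U x ->
  exists2 e, 0 < e & forall y, dX x y < e -> U y.
Proof.
rewrite openE => /[apply] /nbhs_ballP [e e0 H]; exists e => //.
Qed.

Lemma cont_metric {Y : pseudoMetricType R} (f : X -> Y) :
  (forall x e, 0 < e -> exists2 d, 0 < d & forall y, dX x y < d -> ball (f x) e (f y)) ->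
  continuous f.
Proof.
move=> H x B /nbhs_ballP [e e0 He].
have [d d0 Hd] := H x e e0.
apply/nbhs_ballP; exists d => // y /ballX hy; apply: He; exact: Hd.
Qed.

Lemma dd_agree (x y : nat -> A) k : (forall i, (i < k)%N -> x i = y i) ->
  dd x y <= 2 * wt k.
Proof.
move=> H; apply: dd_le => n; case: (ltnP n k) => nk.
  rewrite /term H // dA_xx mulr0; have := wt_gt0 R k; lra.
apply: le_trans (term_le _ _ _) _; have := wt_anti R nk; lra.
Qed.

Lemma wt_small (e : R) : 0 < e -> exists k, 2 * wt k < e.
Proof.
move=> e0; have e2 : 0 < e / 2 by lra.
have [N _ HN] := near_infty_natSinv_lt (PosNum e2).
exists N; have /= h := HN N (leqnn N); rewrite /wt; move: h; set t := N.+1%:R^-1; lra.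
Qed.

Lemma dd_bool (x y : nat -> A) i : dd x y < wt i -> (x i).2 = (y i).2.
Proof.
move=> h; have h1 : dA (x i) (y i) < 1.
  rewrite -(ltr_pM2l (wt_gt0 R i)) mulr1; exact: le_lt_trans (dd_ub _ _ _) h.
move: h1; rewrite /dA; case: eqP => // _.
have := min1_ge0 (mdist_ge0 (x i).1 (y i).1); rewrite /=; lra.
Qed.

Lemma dd_z (x y : nat -> A) i (r : R) : r <= 1 -> dd x y < wt i * r ->
  mdist (x i).1 (y i).1 < r.
Proof.
move=> r1 h; have h1 : dA (x i) (y i) < r.
  rewrite -(ltr_pM2l (wt_gt0 R i)); exact: le_lt_trans (dd_ub _ _ _) h.
move: h1; rewrite /dA; have := ler0n R ((x i).2 != (y i).2).
rewrite /Num.min; case: ifP; lra.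
Qed.

End Topo.



Section Pts.
Variables (R : realType) (Z : metricType R).
Local Notation A := (A Z).
Local Notation X := (X Z).
Local Notation wt := (wt R).
Local Notation good := (@good R Z).
Local Notation glue := (@glue R Z).
Local Notation bsq := (@bsq R Z).

Lemma good_const (z : Z) : good (fun _ : nat => (z, false)).
Proof. by split => // s e; rewrite cnt0. Qed.

Lemma good_spike (z : Z) k : good (fun i => (z, i == k)).
Proof. by split => // s e; exact: leq_trans (cnt_pt k s (2^e)) _. Qed.

Lemma good_shift (x : nat -> A) : good x -> good (fun i => x i.+1).
Proof.
move=> [p1 p2]; split => [n|s e]; first exact: p1.
have <- : cnt (bsq x) s.+1 (2 ^ e) = cnt (bsq (fun i => x i.+1)) s (2 ^ e).
  by apply: eq_bigr => i _; rewrite /bsq addSn.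
exact: p2.
Qed.

Definition consq (x : nat -> A) i := if i is j.+1 then x j else ((x 0%N).1, false).

Lemma good_cons (x : nat -> A) : good x -> good (consq x).
Proof.
move=> [p1 p2]; split => [[|n] //|s e]; first exact: p1.
case: s => [|s].
  have -> : (2 ^ e = 1 + (2 ^ e).-1)%N by rewrite add1n prednK // expn_gt0.
  rewrite cnt_split /= add0n {1}/cnt big_ord1 /= add0n.
  have -> : cnt (bsq (consq x)) 1 (2 ^ e).-1 = cnt (bsq x) 0 (2 ^ e).-1.
    by apply: eq_bigr => i _.
  apply: leq_trans (cnt_mono_len _ _ (leq_pred _)) (p2 0%N e).
have -> : cnt (bsq (consq x)) s.+1 (2 ^ e) = cnt (bsq x) s (2 ^ e).
  by apply: eq_bigr => i _; rewrite /bsq addSn.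
exact: p2.
Qed.

Lemma good_glue x y m N : good x -> good y -> (0 < m)%N -> (m + 2 * Gm m <= N)%N ->
  good (glue x y m N).
Proof. by move=> gx gy m0 mN; split; [exact: glue_P1|exact: glue_P2]. Qed.

Lemma glue_left x y m N i : (i < m)%N -> glue x y m N i = x i.
Proof. by move=> im; rewrite /glue /zg /bg im; case: (x i). Qed.

Lemma glue_right x y m N i : (0 < m)%N -> (m + 2 * Gm m <= N)%N -> (i < m)%N ->
  glue x y m N (N + i) = y i.
Proof.
move=> m0 mN im; rewrite /glue /zg /bg.
have G0 : (0 < Gm m)%N by rewrite /Gm expn_gt0.
have -> : (N + i < m)%N = false by lia.
have -> : (N + i <= m + Gm m)%N = false by lia.
have -> : (N + i < N)%N = false by lia.
have -> : (N + i < N + m)%N = true by lia.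
have -> : (N + i == m + Gm m) = false by lia.
have -> : (N <= N + i)%N = true by lia.
by rewrite addKn; case: (y i).
Qed.

Definition cX (z : Z) : X := exist _ _ (good_const z).
Definition spX (z : Z) k : X := exist _ _ (good_spike z k).
Definition shiftX (x : X) : X := exist _ _ (good_shift (proj2_sig x)).
Definition consX (x : X) : X := exist _ _ (good_cons (proj2_sig x)).

Lemma iter_shiftX n (x : X) : sval (iter n shiftX x) = fun i => sval x (n + i)%N.
Proof. by elim: n => [|n IH] //=; rewrite IH; apply/funext => i; rewrite addnS addSn. Qed.

Local Open Scope ring_scope.

Lemma wt_S n : wt n <= 2 * wt n.+1.
Proof.
rewrite /wt ler_pdivlMr ?ltr0n // mulrC ler_pdivrMr ?ltr0n //.
by rewrite -natrM ler_nat; lia.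
Qed.

Lemma dd_shift (x y : nat -> A) :
  dd (fun i => x i.+1) (fun i => y i.+1) <= 2 * dd x y.
Proof.
apply: dd_le => n; rewrite /term.
apply: le_trans (_ : 2 * (wt n.+1 * dA (x n.+1) (y n.+1)) <= _).
  rewrite mulrA ler_wpM2r ?dA_ge0 //; exact: wt_S.
by rewrite ler_wpM2l //; exact: (dd_ub x y n.+1).
Qed.

Lemma shiftX_cont : continuous shiftX.
Proof.
apply: cont_metric => x e e0; exists (e / 2); first lra.
move=> y hy; apply/ballX; rewrite /dX /=.
apply: le_lt_trans (dd_shift _ _) _; rewrite /dX in hy; lra.
Qed.

Lemma shiftX_surj (y : X) : exists x, shiftX x = y.
Proof. by exists (consX y); apply: X_eq. Qed.

End Pts.



Section Cpt.
Variables (R : realType) (Z : metricType R).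
Local Notation A := (A Z).
Local Notation X := (X Z).
Local Notation wt := (wt R).
Local Notation good := (@good R Z).
Local Notation bsq := (@bsq R Z).

Lemma filter_forall_lt {T : Type} (F : set_system T) {FF : Filter F} (P : nat -> set T) :
  (forall i, F (P i)) -> forall k, F [set x | forall i, (i < k)%N -> P i x].
Proof.
move=> H; elim=> [|k IH]; first by apply: filterS filterT => x _ i.
apply: filterS (filterI IH (H k)) => x [h1 h2] i; rewrite ltnS leq_eqVlt.
by case/orP => [/eqP -> //|]; exact: h1.
Qed.

Local Open Scope ring_scope.

Lemma X_compact : compact [set: Z] -> compact [set: X].
Proof.
move=> Zc; rewrite compact_ultra => F FU _.
have FP : ProperFilter F by exact: ultra_proper.
have Hz : forall n, exists z : Z, forall S, nbhs z S -> F [set x : X | S (sval x n).1].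
  move=> n; pose pz (x : X) := (sval x n).1.
  have [z [_ cz]] := Zc (pz @ F) _ filterT.
  exists z => S zS.
  case: (in_ultra_setVsetC [set x : X | S (sval x n).1] FU) => // Fc.
  have [w [w1 w2]] := cz (~` S) S Fc zS.
  by [].
have [zf Hzf] := choice Hz.
have Hb : forall n, exists b : bool, F [set x : X | (sval x n).2 = b].
  move=> n; case: (in_ultra_setVsetC [set x : X | (sval x n).2 = true] FU) => Fc.
    by exists true.
  by exists false; apply: filterS Fc => x /=; case: (sval x n).2.
have [bf Hbf] := choice Hb.
pose p := fun n => (zf n, bf n).
have gp : good p.
  split.
    move=> n /= bn; apply/eqP; apply/negP => /negP zne.
    have r0 : 0 < mdist (zf n) (zf n.+1) by rewrite mdist_gt0.
    set r := mdist (zf n) (zf n.+1) in r0 *.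
    have r2 : 0 < r / 2 by lra.
    have F1 := Hzf n _ (nbhsx_ballx (zf n) _ r2).
    have F2 := Hzf n.+1 _ (nbhsx_ballx (zf n.+1) _ r2).
    have [x [[x1 x2] x3]] := filter_ex (filterI (filterI F1 F2) (Hbf n)).
    move: x1 x2; rewrite !ballEmdist /=.
    have [p1 _] := proj2_sig x.
    rewrite -(p1 n) ?x3 //.
    have := metric_triangle (zf n) (sval x n).1 (zf n.+1).
    rewrite (metric_sym (sval x n).1 (zf n.+1)); rewrite -/r; lra.
  move=> s e.
  have [x Hx] := filter_ex (filter_forall_lt (fun i => Hbf (s + i)%N) (2 ^ e)).
  have [_ p2] := proj2_sig x.
  apply: leq_trans (p2 s e); rewrite leq_eqVlt; apply/orP; left; apply/eqP.
  by apply: eq_bigr => i _; rewrite /bsq /= Hx.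
exists (exist _ p gp); split => //.
move=> B /nbhs_ballP [e /= e0 He].
have e2 : 0 < e / 2 by lra.
have [k hk] := wt_small e2.
pose P i := [set x : X | (sval x i).2 = bf i /\ mdist (zf i) (sval x i).1 < e / 2].
have FP' : forall i, F (P i).
  move=> i; apply: filterS (filterI (Hbf i) (Hzf i _ (nbhsx_ballx (zf i) _ e2))).
  by move=> x [h1]; rewrite ballEmdist /= => h2; split.
apply: filterS (filter_forall_lt FP' k) => x Hx; apply: He; apply/ballX.
rewrite /dX /=.
suff : dd p (sval x) <= e / 2 by lra.
apply: dd_le => n; case: (ltnP n k) => nk.
  have [h1 h2] := Hx n nk; rewrite /term /dA /= h1 eqxx addr0.
  apply: le_trans (_ : 1 * mdist (zf n) (sval x n).1 <= _); last lra.
  apply: ler_pM; rewrite ?wt_le1 ?min1_le ?min1_ge0 ?mdist_ge0 //.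
  exact: ltW (wt_gt0 R n).
apply: le_trans (term_le _ _ _) _; have := wt_anti R nk; lra.
Qed.

End Cpt.



Section Dyn.
Variables (R : realType) (Z : metricType R).
Local Notation A := (A Z).
Local Notation X := (X Z).
Local Notation wt := (wt R).
Local Notation good := (@good R Z).
Local Notation bsq := (@bsq R Z).
Local Notation shiftX := (@shiftX R Z).

Lemma zero_run (x : nat -> A) : good x -> forall L, exists s, forall i, (i < L)%N -> (x (s + i)%N).2 = false.
Proof.
move=> [_ p2] L; apply: contrapT => /forallNP H.
have H1 : forall s, (1 <= cnt (bsq x) s L)%N.
  move=> s; have /existsNP [i /not_implyP [iL nf]] := H s.
  have xt : (x (s + i)%N).2 = true by move: nf; case: (x _).2.
  by apply: leq_trans (cnt_ge_term _ _ iL); rewrite /bsq xt.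
have H2 := cnt_blocks H1 (2 ^ (L + 2)) 0.
have hL : (L < 2 ^ L)%N by apply: ltn_expl.
have H3 : (L * 2 ^ (L + 2) <= 2 ^ (L + (L + 2)))%N.
  by rewrite (expnD 2 L (L + 2)); apply: leq_mul (ltnW hL) (leqnn _).
have H4 := leq_trans H2 (leq_trans (cnt_mono_len _ _ H3) (p2 0 (L + (L + 2)))).
move: H4; rewrite expnD; have -> : (2 ^ 2 = 4)%N by [].
lia.
Qed.

Definition allF (x : X) := forall i, (sval x i).2 = false.

Lemma allF_const (x : X) : allF x -> sval x = fun _ => ((sval x 0%N).1, false).
Proof.
move=> H; have [p1 _] := proj2_sig x.
have Hz : forall n, (sval x n).1 = (sval x 0%N).1.
  by elim=> [|n IH] //; rewrite -(p1 n) ?H.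
by apply/funext => n; rewrite -(H n) -(Hz n); case: (sval x n).
Qed.


Lemma allF_fixed (x : X) : allF x -> shiftX x = x.
Proof. by move=> H; apply: X_eq; rewrite /= (allF_const H). Qed.

Definition Bz L := [set x : X | forall i, (i < L)%N -> (sval x i).2 = false].

Lemma Bz_closed L : closed (Bz L).
Proof.
move=> x clx i iL.
have [y [Hy /ballX hxy]] := clx _ (nbhsx_ballx x (wt L) (wt_gt0 R L)).
rewrite -(Hy i iL); apply: dd_bool; apply: lt_le_trans hxy (wt_anti R (ltnW iL)).
Qed.

Lemma X_closed1 (p : X) : closed [set p].
Proof. exact: (accessible_closed_set1 (hausdorff_accessible (@metric_hausdorff _ X))). Qed.

Lemma closed_inv_fixed (K : set X) : compact [set: Z] -> K !=set0 -> closed K ->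
  shiftX @` K `<=` K -> exists2 p, K p & allF p.
Proof.
move=> Zc [x0 Kx0] Kc Kinv.
have Kcpt : compact K := subclosed_compact Kc (X_compact Zc) (@subsetT _ K).
have iterK : forall n x, K x -> K (iter n shiftX x).
  elim=> [//|n IH] x Kx /=; apply: Kinv; exists (iter n shiftX x) => //; exact: IH.
pose Fb L := K `&` Bz L.
have ne : forall L, Fb L !=set0.
  move=> L; have [s Hs] := zero_run (proj2_sig x0) L.
  exists (iter s shiftX x0); split; first exact: iterK.
  move=> i iL; rewrite iter_shiftX; exact: Hs.
pose G := filter_from [set: nat] Fb.
have GF : Filter G.
  apply: filter_from_filter; first by exists 0%N.
  move=> i j _ _; exists (maxn i j) => // x [Kx Hx]; split; split=> // k kl; apply: Hx; lia.
have GP : ProperFilter G := filter_from_proper GF (fun i _ => ne i).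
have GK : G K by exists 0%N => // x [].
have [p [Kp cp]] := Kcpt G GP GK.
exists p => // i.
have : closure (Fb i.+1) p by rewrite clusterE in cp; apply: cp; exists i.+1.
have Fc : closed (Fb i.+1) by apply: closedI => //; exact: Bz_closed.
move/closure_id: Fc => <-.
by move=> [_ h]; apply: h.
Qed.

Lemma minimal_set_char (K : set X) : compact [set: Z] -> minimal_set shiftX K ->
  exists p, allF p /\ K = [set p].
Proof.
move=> Zc [Kne Kc Kinv Kmin].
have [p Kp Fp] := closed_inv_fixed Zc Kne Kc Kinv.
exists p; split => //; symmetry; apply: Kmin.
- by move=> _ ->.
- by exists p.
- exact: X_closed1.
- by move=> _ [_ -> <-]; rewrite allF_fixed.
Qed.

Lemma minimal_point_allF (x : X) : compact [set: Z] -> minimal_point shiftX x -> allF x.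
Proof.
move=> Zc [K [mK Kx]]; have [p [Fp Kp]] := minimal_set_char Zc mK.
by move: Kx; rewrite Kp => ->.
Qed.

Lemma cX_minimal (z : Z) : minimal_point shiftX (cX z).
Proof.
exists [set cX z]; split => //; split.
- by exists (cX z).
- exact: X_closed1.
- by move=> _ [_ -> <-]; apply: X_eq.
- move=> K' K'sub [y K'y] _ _; apply/seteqP; split=> // _ ->.
  by have := K'sub _ K'y => /= <-.
Qed.

End Dyn.



Section Fin.
Variables (R : realType) (Z : metricType R).
Local Notation A := (A Z).
Local Notation X := (X Z).
Local Notation wt := (wt R).
Local Notation good := (@good R Z).
Local Notation glue := (@glue R Z).
Local Notation shiftX := (@shiftX R Z).
Local Open Scope ring_scope.

Lemma mixing : topologically_mixing shiftX.
Proof.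
move=> U V Uo Vo [x Ux] [y Vy].
have [e1 e10 H1] := open_ballX Uo Ux.
have [e2 e20 H2] := open_ballX Vo Vy.
have [k1 hk1] := wt_small e10; have [k2 hk2] := wt_small e20.
pose m := (maxn k1 k2).+1.
have m0 : (0 < m)%N by [].
apply: (sub_finite_set _ (finite_II (m + 2 * Gm m)%N)).
move=> N /= HN; rewrite ltnNge; apply/negP => mN; apply: HN.
pose w : X := exist _ _ (good_glue (proj2_sig x) (proj2_sig y) m0 mN).
exists w; split.
- apply: H1; rewrite /dX /=.
  apply: le_lt_trans (dd_agree (k := m) _) _.
    by move=> i im; rewrite glue_left.
  apply: le_lt_trans _ hk1; apply: ler_wpM2l => //.
  by apply: wt_anti; apply: leqW; apply: leq_maxl.
- rewrite /= ; apply: H2; rewrite /dX iter_shiftX /=.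
  apply: le_lt_trans (dd_agree (k := m) _) _.
    by move=> i im; rewrite glue_right.
  apply: le_lt_trans _ hk2; apply: ler_wpM2l => //.
  by apply: wt_anti; apply: leqW; apply: leq_maxr.
Qed.


Lemma noiso (x : X) : ~ open [set x].
Proof.
move=> xo; have [e e0 H] := open_ballX xo (erefl x).
have [k hk] := wt_small e0; pose m := k.+1.
have m0 : (0 < m)%N by [].
have mN : (m + 2 * Gm m <= m + 2 * Gm m)%N := leqnn _.
pose z0 := (sval x 0%N).1.
pose w1 : X := exist _ _ (good_glue (proj2_sig x) (proj2_sig (cX z0)) m0 mN).
pose w2 : X := exist _ _ (good_glue (proj2_sig x) (proj2_sig (spX z0 0)) m0 mN).
have close : forall y : X, (forall i, (i < m)%N -> sval x i = sval y i) -> y = x.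
  move=> y hy; apply: H; rewrite /dX.
  apply: le_lt_trans (dd_agree hy) _; apply: le_lt_trans _ hk.
  by apply: ler_wpM2l => //; apply: wt_anti.
have e1 : w1 = x by apply: close => i im; rewrite /= glue_left.
have e2 : w2 = x by apply: close => i im; rewrite /= glue_left.
have : sval w1 (m + 2 * Gm m + 0)%N = sval w2 (m + 2 * Gm m + 0)%N by rewrite e1 e2.
by rewrite /= !glue_right.
Qed.

Lemma cX_spX (z : Z) : cX z <> spX z 0.
Proof. by move=> /(congr1 (fun x : X => (sval x 0%N).2)). Qed.

Definition fZ (x : X) : Z := (sval x 0%N).1.

Lemma fZ_cont : continuous fZ.
Proof.
apply: cont_metric => x e e0.
have [r [r0 r1 re]] : exists r : R, [/\ 0 < r, r <= 1 & r <= e].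
  by case: (lerP e 1) => he; [exists e|exists 1]; split => //; lra.
exists (wt 0 * r); first by rewrite mulr_gt0 // wt_gt0.
move=> y hy; rewrite ballEmdist /=; apply: lt_le_trans re.
exact: dd_z r1 hy.
Qed.

Lemma cX_cont : continuous (@cX R Z).
Proof.
move=> z B /nbhs_ballP [e /= e0 He]; apply/nbhs_ballP; exists e => // z' hz'.
apply: He; apply/ballX; apply: le_lt_trans _ (_ : mdist z z' < e); last first.
  by move: hz'; rewrite ballEmdist.
apply: dd_le => n; rewrite /term /dA /= addr0.
apply: le_trans (_ : 1 * mdist z z' <= _); last lra.
apply: ler_pM; rewrite ?wt_le1 ?min1_le ?min1_ge0 ?mdist_ge0 //.
exact: ltW (wt_gt0 R n).
Qed.

End Fin.

Theorem proposition6p3 (R : realType) (Z : metricType R) :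
  compact [set: Z] -> [set: Z] !=set0 ->
  exists (X : metricType R) (T : X -> X),
    [/\ dynamical_system T, topologically_mixing T,
        @homeomorphic_to X Z (minimal_points T) &
        (forall x : X, minimal_point T x -> T x = x)].
Proof.
move=> Zc [z0 _].
exists (X Z), (@shiftX R Z); split.
- split.
  + exact: X_compact.
  + by exists (cX z0), (spX z0 0); exact: cX_spX.
  + exact: noiso.
  + exact: shiftX_cont.
  + exact: shiftX_surj.
- exact: mixing.
- exists (@fZ R Z), (@cX R Z); split.
  + by apply: continuous_subspaceT; exact: fZ_cont.
  + exact: cX_cont.
  + by move=> z; exact: cX_minimal.
  + move=> x /(minimal_point_allF Zc) Fx; apply: X_eq => /=.
    by rewrite [RHS](allF_const Fx).
  + by [].
- by move=> x /(minimal_point_allF Zc) /allF_fixed.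
Qed.
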